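(* Let $n = \sum_{i=1}^{k} n_i h_i$ and suppose a holey self-orthogonal latin square HSOLS$(h_1^{n_1}\cdots h_k^{n_k})$ of order $n$ exists. Suppose moreover that for each $i \in \{1,\dots,k\}$ there exist complete mixed doubles round robin tournaments CMDRR$(h_i, m_{i1}), \dots,$ CMDRR$(h_i, m_{i n_i})$. Then there exists a CMDRR$(n, s)$, where $s = \sum_{1 \le i \le k}\sum_{1 \le j \le n_i} m_{ij}$.
   Context: A mixed doubles game is a match between two teams, each team consisting of one man and one woman; in a game $M_a F_b$ v $M_c F_d$, $M_a$ and $F_b$ are partners, $M_c$ and $F_d$ are partners, and each player of one team opposes each player of the other team. A complete mixed doubles round robin tournament CMDRR$(n,k)$ is a schedule (set) of mixed doubles games for $n$ men and $n$ women, of which $k$ men and $k$ women are paired into $k$ spouse pairs (a spouse pair is one man and one woman), such that: spouses never play in a game together as partners or opponents; every man and woman who are not spouses are partners exactly once and opponents exactly once; each player who has a spouse opposes every other player of the same sex exactly once; each player who does not have a spouse opposes some other same-sex player who does not have a spouse exactly twice and opposes all other same-sex players exactly once. By convention a CMDRR$(1,1)$ exists (one spouse pair and no games). A self-orthogonal latin square (SOLS) is a latin square orthogonal to its transpose. A holey SOLS HSOLS$(h_1^{n_1}\cdots h_k^{n_k})$ is a self-orthogonal latin square of order $n=\sum n_i h_i$ with, for each $i$, $n_i$ missing sub-SOLS (holes) of order $h_i$, the holes being disjoint and spanning (i.e. the symbol set is partitioned into the holes, and the cells indexed by pairs of rows/columns from the same hole are empty and the symbols of a hole do not occur in that hole's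 rows or columns). *)

(* Defs.v *)
From mathcomp Require Import all_boot.
Set Implicit Arguments. Unset Strict Implicit. Unset Printing Implicit Defensive.

(* A game is a quadruple (a, b, c, d) standing for  M_a F_b  v  M_c F_d. *)
Definition game (n : nat) : finType := ('I_n * 'I_n * 'I_n * 'I_n)%type.
Definition gm1 n (g : game n) : 'I_n := g.1.1.1.
Definition gf1 n (g : game n) : 'I_n := g.1.1.2.
Definition gm2 n (g : game n) : 'I_n := g.1.2.
Definition gf2 n (g : game n) : 'I_n := g.2.

Definition partners n (g : game n) (a b : 'I_n) : bool :=
  ((gm1 g == a) && (gf1 g == b)) || ((gm2 g == a) && (gf2 g == b)).
Definition opp_mw n (g : game n) (a b : 'I_n) : bool :=
  ((gm1 g == a) && (gf2 g == b)) || ((gm2 g == a) && (gf1 g == b)).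
Definition opp_mm n (g : game n) (a a' : 'I_n) : bool :=
  ((gm1 g == a) && (gm2 g == a')) || ((gm2 g == a) && (gm1 g == a')).
Definition opp_ww n (g : game n) (b b' : 'I_n) : bool :=
  ((gf1 g == b) && (gf2 g == b')) || ((gf2 g == b) && (gf1 g == b')).

Definition in_game_m n (g : game n) (a : 'I_n) : bool := (gm1 g == a) || (gm2 g == a).
Definition in_game_w n (g : game n) (b : 'I_n) : bool := (gf1 g == b) || (gf2 g == b).

Definition spouse_matching n (S : {set 'I_n * 'I_n}) : Prop :=
  forall p q, p \in S -> q \in S -> (p.1 = q.1 \/ p.2 = q.2) -> p = q.

Definition has_spouse_m n (S : {set 'I_n * 'I_n}) (a : 'I_n) : bool :=
  [exists b, (a, b) \in S].
Definition has_spouse_w n (S : {set 'I_n * 'I_n}) (b : 'I_n) : bool :=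
  [exists a, (a, b) \in S].

Definition is_CMDRR (n k : nat) (sched : seq (game n)) (S : {set 'I_n * 'I_n}) : Prop :=
  [/\ (spouse_matching S /\ #|S| = k),
      (forall g, g \in sched -> gm1 g != gm2 g /\ gf1 g != gf2 g),
      (forall g a b, g \in sched -> (a, b) \in S ->
          ~~ (in_game_m g a && in_game_w g b)),
      (forall a b, (a, b) \notin S ->
          count (fun g => partners g a b) sched = 1 /\
          count (fun g => opp_mw g a b) sched = 1) &
      (((forall a, has_spouse_m S a ->
          forall a', a' != a -> count (fun g => opp_mm g a a') sched = 1) /\
      (forall a, ~~ has_spouse_m S a ->
          exists a', [/\ a' != a, ~~ has_spouse_m S a',
             count (fun g => opp_mm g a a') sched = 2 &
             forall a'', a'' != a -> a'' != a' ->
               count (fun g => opp_mm g a a'') sched = 1])) /\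
      ((forall b, has_spouse_w S b ->
          forall b', b' != b -> count (fun g => opp_ww g b b') sched = 1) /\
      (forall b, ~~ has_spouse_w S b ->
          exists b', [/\ b' != b, ~~ has_spouse_w S b',
             count (fun g => opp_ww g b b') sched = 2 &
             forall b'', b'' != b -> b'' != b' ->
               count (fun g => opp_ww g b b'') sched = 1])))].

Definition CMDRR_exists (n k : nat) : Prop :=
  exists (sched : seq (game n)) (S : {set 'I_n * 'I_n}), @is_CMDRR n k sched S.

(* L is an HSOLS of order n whose holes are indexed by T, hole t having size
   sz t; [hole x] is the hole containing row/column/symbol x. Empty cells are None. *)
Definition is_HSOLS (n : nat) (T : finType) (sz : T -> nat) (hole : 'I_n -> T)
    (L : 'I_n -> 'I_n -> option 'I_n) : Prop :=
  [/\ (forall t, #|[set x | hole x == t]| = sz t),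
      (forall r c, (L r c == None) = (hole r == hole c)),
      (* row r contains each symbol outside the hole of r exactly once,
         and no symbol of its own hole *)
      (forall r x, #|[set c | L r c == Some x]| = (hole x != hole r)),
      (forall c x, #|[set r | L r c == Some x]| = (hole x != hole c)) &
      (* orthogonal to its transpose: superimposing L and L^T, every ordered pair
         of symbols from distinct holes occurs exactly once (and no other pair) *)
      (forall x y, #|[set rc : 'I_n * 'I_n |
                      (L rc.1 rc.2 == Some x) && (L rc.2 rc.1 == Some y)]|
                   = (hole x != hole y))].

Definition HSOLS_exists (n : nat) (T : finType) (sz : T -> nat) : Prop :=
  exists hole L, @is_HSOLS n T sz hole L.

(* Main.v *)
Require Import Defs.
From mathcomp Require Import all_boot.
From Stdlib Require Import ClassicalEpsilon.
Set Implicit Arguments. Unset Strict Implicit. Unset Printing Implicit Defensive.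

Lemma sum_sig (k : nat) (nn : 'I_k -> nat) (m : forall i : 'I_k, 'I_(nn i) -> nat) :
  \sum_(t : {i : 'I_k & 'I_(nn i)}) m (tag t) (tagged t) =
  \sum_(i < k) \sum_(j < nn i) m i j.
Proof.
rewrite (partition_big (fun t => tag t) predT) //=.
apply: eq_bigr => i _.
rewrite (big_tag (fun i j => m i j)).
apply: eq_big => [t|[i' j]]; first by [].
move=> /eqP e.
rewrite (untagE _ _ e). simpl in e. destruct e. by [].
Qed.


Lemma count_one (X : eqType) (s : seq X) (P : pred X) x :
  uniq s -> x \in s -> P x -> (forall y, y \in s -> P y -> y = x) -> count P s = 1.
Proof.
move=> us xs Px H.
have -> : count P s = count (pred1 x) s.
  apply: eq_in_count => y ys /=; apply/idP/eqP; first exact: H.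
  by move=> ->.
by rewrite count_uniq_mem // xs.
Qed.

Lemma count_zero (X : eqType) (s : seq X) (P : pred X) :
  (forall y, y \in s -> ~~ P y) -> count P s = 0.
Proof. by move=> H; apply/eqP; rewrite -leqn0 leqNgt -has_count; apply/hasPn. Qed.

Section HSpart.
Variables (n : nat) (T : finType) (sz : T -> nat) (hole : 'I_n -> T)
  (L : 'I_n -> 'I_n -> option 'I_n).
Hypothesis HL : is_HSOLS sz hole L.

Lemma filled_some r c : hole r != hole c -> exists x, L r c = Some x.
Proof.
case: HL => _ H2 _ _ _ h; move: (H2 r c); rewrite (negbTE h).
by case: (L r c) => // x _; exists x.
Qed.

Lemma some_holes r c x : L r c = Some x ->
  [/\ hole x != hole r, hole x != hole c & hole r != hole c].
Proof.
case: HL => _ H2 H3 H4 _ Hx; split.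
- have : 0 < #|[set c' | L r c' == Some x]| by apply/card_gt0P; exists c; rewrite inE Hx.
  by rewrite H3; case: (_ != _).
- have : 0 < #|[set r' | L r' c == Some x]| by apply/card_gt0P; exists r; rewrite inE Hx.
  by rewrite H4; case: (_ != _).
- by rewrite -H2 Hx.
Qed.

Lemma some_xy r c x y : L r c = Some x -> L c r = Some y -> hole x != hole y.
Proof.
case: HL => _ _ _ _ H5 Hx Hy.
have : 0 < #|[set rc : 'I_n * 'I_n | (L rc.1 rc.2 == Some x) && (L rc.2 rc.1 == Some y)]|.
  by apply/card_gt0P; exists (r, c); rewrite inE /= Hx Hy !eqxx.
by rewrite H5; case: (_ != _).
Qed.

Lemma row_unique r x : hole x != hole r ->
  exists c, forall c', (L r c' == Some x) = (c' == c).
Proof.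
case: HL => _ _ H3 _ _ h; move: (H3 r x); rewrite h => /eqP /cards1P [c E].
by exists c => c'; move/setP: E => /(_ c'); rewrite !inE.
Qed.

Lemma col_unique c x : hole x != hole c ->
  exists r, forall r', (L r' c == Some x) = (r' == r).
Proof.
case: HL => _ _ _ H4 _ h; move: (H4 c x); rewrite h => /eqP /cards1P [r E].
by exists r => r'; move/setP: E => /(_ r'); rewrite !inE.
Qed.

Lemma pair_unique x y : hole x != hole y ->
  exists r c, forall r' c', ((L r' c' == Some x) && (L c' r' == Some y)) = ((r' == r) && (c' == c)).
Proof.
case: HL => _ _ _ _ H5 h; move: (H5 x y); rewrite h => /eqP /cards1P [[r c] E].
exists r, c => r' c'; move/setP: E => /(_ (r', c')); rewrite !inE /=.
by rewrite xpair_eqE.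
Qed.

Definition hg (rc : 'I_n * 'I_n) : game n :=
  (rc.1, odflt rc.1 (L rc.1 rc.2), rc.2, odflt rc.1 (L rc.2 rc.1)).

Definition HS : seq (game n) :=
  [seq hg rc | rc <- enum [pred rc : 'I_n * 'I_n | (rc.1 < rc.2) && (hole rc.1 != hole rc.2)]].

Lemma HS_uniq : uniq HS.
Proof.
rewrite map_inj_uniq ?enum_uniq //.
by move=> [r c] [r' c']; rewrite /hg /= => -[-> _ -> _].
Qed.

Lemma mem_HS g : g \in HS -> exists r c x y : 'I_n,
  [/\ r < c, L r c = Some x, L c r = Some y & g = (r, x, c, y)].
Proof.
case/mapP => -[r c]; rewrite mem_enum inE /= => /andP [rc hrc] ->.
have [x Hx] := filled_some hrc.
have [y Hy] : exists y, L c r = Some y by apply: filled_some; rewrite eq_sym.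
by exists r, c, x, y; rewrite /hg /= Hx Hy.
Qed.

Lemma HS_in r c x y : L r c = Some x -> L c r = Some y -> r < c ->
  ((r, x, c, y) : game n) \in HS.
Proof.
move=> Hx Hy rc; apply/mapP; exists (r, c); last by rewrite /hg /= Hx Hy.
by rewrite mem_enum inE /= rc; case: (some_holes Hx).
Qed.

Lemma count_HS1 (P : pred (game n)) r0 c0 x0 y0 :
  (forall r c x y, P (r, x, c, y) = P (c, y, r, x)) ->
  L r0 c0 = Some x0 -> L c0 r0 = Some y0 -> P (r0, x0, c0, y0) ->
  (forall r c x y, L r c = Some x -> L c r = Some y -> P (r, x, c, y) ->
     (r, c) = (r0, c0) \/ (r, c) = (c0, r0)) ->
  count P HS = 1.
Proof.
move=> Psw H0x H0y P0 Hu.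
have [_ _ h0] := some_holes H0x.
have rc0 : r0 != c0 by apply: contraNneq h0 => ->.
case: (ltngtP r0 c0) => [lt|lt|/val_inj e]; last by rewrite e eqxx in rc0.
- apply: (@count_one _ _ _ (r0, x0, c0, y0)) => //; first exact: HS_uniq.
    exact: HS_in.
  move=> g /mem_HS [r [c [x [y [rc Hx Hy ->]]]]] Pg.
  case: (Hu _ _ _ _ Hx Hy Pg) => -[er ec]; subst r c.
    by move: Hx Hy; rewrite H0x H0y => -[->] [->].
  by move: (ltn_trans rc lt); rewrite ltnn.
- apply: (@count_one _ _ _ (c0, y0, r0, x0)) => //; first exact: HS_uniq.
    exact: HS_in.
    by rewrite -Psw.
  move=> g /mem_HS [r [c [x [y [rc Hx Hy ->]]]]] Pg.
  case: (Hu _ _ _ _ Hx Hy Pg) => -[er ec]; subst r c.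
    by move: (ltn_trans rc lt); rewrite ltnn.
  by move: Hx Hy; rewrite H0x H0y => -[->] [->].
Qed.

Lemma count_HS0 (P : pred (game n)) :
  (forall r c x y, L r c = Some x -> L c r = Some y -> ~~ P (r, x, c, y)) ->
  count P HS = 0.
Proof.
move=> H; apply: count_zero => g /mem_HS [r [c [x [y [_ Hx Hy ->]]]]].
exact: H.
Qed.


Ltac unf := rewrite /partners /opp_mw /opp_mm /opp_ww /gm1 /gf1 /gm2 /gf2 /=.

Lemma HS_partners a b : count (fun g => partners g a b) HS = (hole a != hole b).
Proof.
case: (boolP (hole a == hole b)) => [/eqP hab | hab] /=.
- apply: count_HS0 => r c x y Hx Hy; unf.
  have [hxr hxc hrc] := some_holes Hx; have [hyc hyr _] := some_holes Hy.
  apply/negP => /orP [/andP [/eqP er /eqP ex] | /andP [/eqP ec /eqP ey]]; subst.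
    by rewrite hab eqxx in hxr.
  by rewrite hab eqxx in hyc.
- have hba : hole b != hole a by rewrite eq_sym.
  have [c0 Hc0] := row_unique hba.
  have H0 : L a c0 = Some b by apply/eqP; rewrite Hc0.
  have [_ _ hac] := some_holes H0.
  have [y0 Hy0] : exists y0, L c0 a = Some y0 by apply: filled_some; rewrite eq_sym.
  apply: (count_HS1 (r0:=a) (c0:=c0) (x0:=b) (y0:=y0)) => //.
  + by move=> r c x y; unf; rewrite orbC.
  + by unf; rewrite !eqxx.
  + move=> r c x y Hx Hy; unf.
    case/orP => /andP [/eqP er /eqP ex]; subst.
      by left; move: (Hc0 c); rewrite Hx eqxx => /esym/eqP ->.
    by right; move: (Hc0 r); rewrite Hy eqxx => /esym/eqP ->.
Qed.

Lemma HS_oppmw a b : count (fun g => opp_mw g a b) HS = (hole a != hole b).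
Proof.
case: (boolP (hole a == hole b)) => [/eqP hab | hab] /=.
- apply: count_HS0 => r c x y Hx Hy; unf.
  have [hxr hxc hrc] := some_holes Hx; have [hyc hyr _] := some_holes Hy.
  apply/negP => /orP [/andP [/eqP er /eqP ex] | /andP [/eqP ec /eqP ey]]; subst.
    by rewrite hab eqxx in hyr.
  by rewrite hab eqxx in hxc.
- have hba : hole b != hole a by rewrite eq_sym.
  have [r0 Hr0] := col_unique hba.
  have H0 : L r0 a = Some b by apply/eqP; rewrite Hr0.
  have [_ _ hra] := some_holes H0.
  have [x0 Hx0] : exists x0, L a r0 = Some x0 by apply: filled_some; rewrite eq_sym.
  apply: (count_HS1 (r0:=a) (c0:=r0) (x0:=x0) (y0:=b)) => //.
  + by move=> r c x y; unf; rewrite orbC.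
  + by unf; rewrite !eqxx.
  + move=> r c x y Hx Hy; unf.
    case/orP => /andP [/eqP er /eqP ex]; subst.
      by left; move: (Hr0 c); rewrite Hy eqxx => /esym/eqP ->.
    by right; move: (Hr0 r); rewrite Hx eqxx => /esym/eqP ->.
Qed.

Lemma HS_oppmm a a' : count (fun g => opp_mm g a a') HS = (hole a != hole a').
Proof.
case: (boolP (hole a == hole a')) => [/eqP hab | hab] /=.
- apply: count_HS0 => r c x y Hx Hy; unf.
  have [hxr hxc hrc] := some_holes Hx.
  apply/negP => /orP [/andP [/eqP er /eqP ex] | /andP [/eqP ec /eqP ey]]; subst.
    by rewrite hab eqxx in hrc.
  by rewrite hab eqxx in hrc.
- have [x0 Hx0] := filled_some hab.
  have [y0 Hy0] : exists y0, L a' a = Some y0 by apply: filled_some; rewrite eq_sym.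
  apply: (count_HS1 (r0:=a) (c0:=a') (x0:=x0) (y0:=y0)) => //.
  + by move=> r c x y; unf; rewrite orbC.
  + by unf; rewrite !eqxx.
  + move=> r c x y Hx Hy; unf.
    by case/orP => /andP [/eqP er /eqP ex]; subst; [left|right].
Qed.

Lemma HS_oppww b b' : count (fun g => opp_ww g b b') HS = (hole b != hole b').
Proof.
case: (boolP (hole b == hole b')) => [/eqP hab | hab] /=.
- apply: count_HS0 => r c x y Hx Hy; unf.
  have hxy := some_xy Hx Hy.
  apply/negP => /orP [/andP [/eqP er /eqP ex] | /andP [/eqP ec /eqP ey]]; subst.
    by rewrite hab eqxx in hxy.
  by rewrite hab eqxx in hxy.
- have [r0 [c0 Hrc0]] := pair_unique hab.
  have /andP [/eqP H0 /eqP H1] : (L r0 c0 == Some b) && (L c0 r0 == Some b') by rewrite Hrc0 !eqxx.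
  apply: (count_HS1 (r0:=r0) (c0:=c0) (x0:=b) (y0:=b')) => //.
  + by move=> r c x y; unf; rewrite orbC.
  + by unf; rewrite !eqxx.
  + move=> r c x y Hx Hy; unf.
    case/orP => /andP [/eqP er /eqP ex]; subst.
      by left; move: (Hrc0 r c); rewrite Hx Hy !eqxx => /esym/andP [/eqP -> /eqP ->].
    by right; move: (Hrc0 c r); rewrite Hx Hy !eqxx => /esym/andP [/eqP -> /eqP ->].
Qed.

Lemma HS_distinct g : g \in HS -> gm1 g != gm2 g /\ gf1 g != gf2 g.
Proof.
case/mem_HS => r [c [x [y [rc Hx Hy ->]]]]; rewrite /gm1 /gm2 /gf1 /gf2 /=.
split; first by rewrite neq_ltn rc.
by apply: contraNneq (some_xy Hx Hy) => ->.
Qed.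

Lemma HS_spouse g a b : g \in HS -> hole a = hole b ->
  ~~ (in_game_m g a && in_game_w g b).
Proof.
case/mem_HS => r [c [x [y [rc Hx Hy ->]]]] hab.
rewrite /in_game_m /in_game_w /gm1 /gm2 /gf1 /gf2 /=.
have [hxr hxc _] := some_holes Hx; have [hyc hyr _] := some_holes Hy.
apply/negP => /andP [/orP [/eqP ea|/eqP ea] /orP [/eqP eb|/eqP eb]]; subst;
  by rewrite hab eqxx in hxr hxc hyc hyr.
Qed.

End HSpart.


Section Holes.
Variables (n : nat) (T : finType) (sz : T -> nat) (hole : 'I_n -> T).
Local Unset Implicit Arguments.
Variable e : forall t, 'I_(sz t) -> 'I_n.
Local Set Implicit Arguments.
Hypothesis e_hole : forall t u, hole (e t u) = t.
Hypothesis e_inj : forall t, injective (e t).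
Hypothesis e_surj : forall t x, hole x = t -> exists u, e t u = x.
Variables (sch : forall t, seq (game (sz t))) (SS : forall t, {set 'I_(sz t) * 'I_(sz t)}).

Definition eg t (g : game (sz t)) : game n :=
  (e t (gm1 g), e t (gf1 g), e t (gm2 g), e t (gf2 g)).

Definition HH : seq (game n) := flatten [seq map (@eg t) (sch t) | t <- enum T].

Definition Sp : {set 'I_n * 'I_n} :=
  \bigcup_(t : T) [set (e t p.1, e t p.2) | p in SS t].

Lemma hole_ind (Q : 'I_n -> Prop) : (forall t u, Q (e t u)) -> forall a, Q a.
Proof. by move=> H a; have [u <-] := e_surj (erefl (hole a)); apply: H. Qed.

Lemma e_neq t t' u v : t' != t -> (e t' u == e t v) = false.
Proof.
move=> h; apply/negbTE; apply: contra h => /eqP /(congr1 hole).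
by rewrite !e_hole => ->.
Qed.

Lemma count_HH (P : pred (game n)) :
  count P HH = \sum_(t <- enum T) count (fun g => P (eg g)) (sch t).
Proof.
rewrite count_flatten sumnE !big_map; apply: eq_bigr => t _.
by rewrite count_map.
Qed.

Lemma mem_HH g : g \in HH -> exists t g0, g0 \in sch t /\ g = eg g0.
Proof.
case/flattenP => s /mapP [t _ ->] /mapP [g0 g0s ->].
by exists t, g0.
Qed.

Lemma HH_same (Q : forall m, game m -> 'I_m -> 'I_m -> bool) t u v :
  (forall t g u v, Q n (eg g) (e t u) (e t v) = Q (sz t) g u v) ->
  (forall t t' g u v, t' != t -> Q n (@eg t' g) (e t u) (e t v) = false) ->
  count (fun g => Q n g (e t u) (e t v)) HH = count (fun g => Q _ g u v) (sch t).
Proof.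
move=> Hs Hd; rewrite count_HH (bigD1_seq t) ?mem_enum ?enum_uniq //=.
rewrite big1_seq ?addn0; first by apply: eq_count => g; rewrite Hs.
move=> t' /andP [ht' _]; apply: count_zero => g _; by rewrite Hd.
Qed.

Lemma HH_diff (Q : forall m, game m -> 'I_m -> 'I_m -> bool) a b :
  (forall t g a b, hole a != hole b -> Q n (@eg t g) a b = false) ->
  hole a != hole b -> count (fun g => Q n g a b) HH = 0.
Proof.
move=> Hd hab; rewrite count_HH big1_seq // => t _; apply: count_zero => g _.
by rewrite Hd.
Qed.

Lemma eg_hole t (g : game (sz t)) :
  [/\ hole (gm1 (eg g)) = t, hole (gf1 (eg g)) = t, hole (gm2 (eg g)) = t
    & hole (gf2 (eg g)) = t].
Proof. by rewrite /eg /gm1 /gf1 /gm2 /gf2 /= !e_hole. Qed.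

Ltac unf := rewrite /partners /opp_mw /opp_mm /opp_ww /gm1 /gf1 /gm2 /gf2 /=.

Ltac same_tac := move=> ? ? ? ?; rewrite /eg; unf; rewrite !(inj_eq (@e_inj _)) //.
Ltac diff_tac := move=> ? ? ? ? ? ?; rewrite /eg; unf; rewrite !e_neq //.
Ltac diff2_tac := move=> ? ? ? ?; rewrite /eg; unf;
  apply: contraNF => /orP [] /andP [/eqP <- /eqP <-]; by rewrite !e_hole.

Lemma HH_partners_same t u v :
  count (fun g => partners g (e t u) (e t v)) HH = count (fun g => partners g u v) (sch t).
Proof. apply: (HH_same (Q := partners)); [same_tac | diff_tac]. Qed.
Lemma HH_oppmw_same t u v :
  count (fun g => opp_mw g (e t u) (e t v)) HH = count (fun g => opp_mw g u v) (sch t).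
Proof. apply: (HH_same (Q := opp_mw)); [same_tac | diff_tac]. Qed.
Lemma HH_oppmm_same t u v :
  count (fun g => opp_mm g (e t u) (e t v)) HH = count (fun g => opp_mm g u v) (sch t).
Proof. apply: (HH_same (Q := opp_mm)); [same_tac | diff_tac]. Qed.
Lemma HH_oppww_same t u v :
  count (fun g => opp_ww g (e t u) (e t v)) HH = count (fun g => opp_ww g u v) (sch t).
Proof. apply: (HH_same (Q := opp_ww)); [same_tac | diff_tac]. Qed.

Lemma HH_partners_diff a b : hole a != hole b -> count (fun g => partners g a b) HH = 0.
Proof. apply: (HH_diff (Q := partners)); diff2_tac. Qed.
Lemma HH_oppmw_diff a b : hole a != hole b -> count (fun g => opp_mw g a b) HH = 0.
Proof. apply: (HH_diff (Q := opp_mw)); diff2_tac. Qed.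
Lemma HH_oppmm_diff a b : hole a != hole b -> count (fun g => opp_mm g a b) HH = 0.
Proof. apply: (HH_diff (Q := opp_mm)); diff2_tac. Qed.
Lemma HH_oppww_diff a b : hole a != hole b -> count (fun g => opp_ww g a b) HH = 0.
Proof. apply: (HH_diff (Q := opp_ww)); diff2_tac. Qed.


Lemma mem_Sp p : p \in Sp -> exists t (u v : 'I_(sz t)), (u, v) \in SS t /\ p = (e t u, e t v).
Proof. by case/bigcupP => t _ /imsetP [[u v] uv ->]; exists t, u, v. Qed.

Lemma Sp_in t u v : ((e t u, e t v) \in Sp) = ((u, v) \in SS t).
Proof.
apply/idP/idP.
- case/mem_Sp => t' [u' [v' [uv' [E1 E2]]]].
  have ett : t' = t by have := congr1 hole E1; rewrite !e_hole => ->.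
  subst t'; move/e_inj: E1 => ->; by move/e_inj: E2 => ->.
- move=> uv; apply/bigcupP; exists t => //; apply/imsetP; by exists (u, v).
Qed.

Lemma Sp_hole p : p \in Sp -> hole p.1 = hole p.2.
Proof. by case/mem_Sp => t [u [v [_ ->]]] /=; rewrite !e_hole. Qed.

Lemma hs_m t u : has_spouse_m Sp (e t u) = has_spouse_m (SS t) u.
Proof.
apply/existsP/existsP => [[b]|[v uv]].
- case/mem_Sp => t' [u' [v' [uv' [E1 E2]]]].
  have ett : t' = t by have := congr1 hole E1; rewrite !e_hole => ->.
  subst t'; move/e_inj: E1 => ->; by exists v'.
- by exists (e t v); rewrite Sp_in.
Qed.

Lemma hs_w t v : has_spouse_w Sp (e t v) = has_spouse_w (SS t) v.
Proof.
apply/existsP/existsP => [[a]|[u uv]].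
- case/mem_Sp => t' [u' [v' [uv' [E1 E2]]]].
  have ett : t' = t by have := congr1 hole E2; rewrite !e_hole => ->.
  subst t'; move/e_inj: E2 => ->; by exists u'.
- by exists (e t u); rewrite Sp_in.
Qed.

Lemma card_Sp : #|Sp| = \sum_t #|SS t|.
Proof.
rewrite -sum1_card /Sp partition_disjoint_bigcup.
  apply: eq_bigr => t _; rewrite sum1_card card_imset //.
  by move=> [u v] [u' v'] /= [] /e_inj -> /e_inj ->.
move=> i j ij; rewrite disjoint_subset; apply/subsetP => p /imsetP [q _ ->].
rewrite inE; apply/imsetP => -[q' _ [E _]].
by move: ij; rewrite -(e_hole q.1) E e_hole eqxx.
Qed.

Lemma Sp_match : (forall t, spouse_matching (SS t)) -> spouse_matching Sp.
Proof.
move=> Hm p q /mem_Sp [t [u [v [uv ->]]]] /mem_Sp [t' [u' [v' [uv' ->]]]] /= H.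
have ett : t' = t.
  by case: H => /(congr1 hole); rewrite !e_hole.
subst t'.
case: H => /e_inj E.
  by have [-> ->] := Hm t (u, v) (u', v') uv uv' (or_introl E).
by have [-> ->] := Hm t (u, v) (u', v') uv uv' (or_intror E).
Qed.

Lemma opp_transfer (cnt : 'I_n -> 'I_n -> nat)
  (cntt : forall t, 'I_(sz t) -> 'I_(sz t) -> nat) (hs : pred 'I_n)
  (hst : forall t, pred 'I_(sz t)) :
 (forall a b, hole a != hole b -> cnt a b = 1) ->
 (forall t u v, cnt (e t u) (e t v) = cntt t u v) ->
 (forall t u, hs (e t u) = hst t u) ->
 (forall t, (forall a, hst t a -> forall a', a' != a -> cntt t a a' = 1) /\
     (forall a, ~~ hst t a -> exists a', [/\ a' != a, ~~ hst t a', cntt t a a' = 2 &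
         forall a'', a'' != a -> a'' != a' -> cntt t a a'' = 1])) ->
 (forall a, hs a -> forall a', a' != a -> cnt a a' = 1) /\
 (forall a, ~~ hs a -> exists a', [/\ a' != a, ~~ hs a', cnt a a' = 2 &
         forall a'', a'' != a -> a'' != a' -> cnt a a'' = 1]).
Proof.
move=> Hd Hs Hh Ht; split.
- apply: hole_ind => t u; rewrite Hh => hu a' na'.
  case: (boolP (hole (e t u) == hole a')) => [/eqP|] h; last exact: Hd.
  rewrite e_hole in h; have [u' eu'] := e_surj (esym h); subst a'.
  rewrite Hs; apply: (proj1 (Ht t)) hu _ _.
  by apply: contraNneq na' => ->.
- apply: hole_ind => t u; rewrite Hh => hu.
  have [u' [nu' hu' c2 c1]] := proj2 (Ht t) u hu.
  exists (e t u'); split.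
  + by rewrite (inj_eq (@e_inj _)).
  + by rewrite Hh.
  + by rewrite Hs.
  + move=> a'' n1 n2.
    case: (boolP (hole (e t u) == hole a'')) => [/eqP|] h; last exact: Hd.
    rewrite e_hole in h; have [w ew] := e_surj (esym h); subst a''.
    rewrite Hs; apply: c1.
      by apply: contraNneq n1 => ->.
    by apply: contraNneq n2 => ->.
Qed.

End Holes.


Section Main.
Variables (n : nat) (T : finType) (sz : T -> nat) (hole : 'I_n -> T)
  (L : 'I_n -> 'I_n -> option 'I_n).
Hypothesis HL : is_HSOLS sz hole L.
Local Unset Implicit Arguments.
Variable e : forall t, 'I_(sz t) -> 'I_n.
Local Set Implicit Arguments.
Hypothesis e_hole : forall t u, hole (e t u) = t.
Hypothesis e_inj : forall t, injective (e t).
Hypothesis e_surj : forall t x, hole x = t -> exists u, e t u = x.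
Variables (sch : forall t, seq (game (sz t))) (SS : forall t, {set 'I_(sz t) * 'I_(sz t)}).
Variable mm : T -> nat.
Hypothesis Hsch : forall t, @is_CMDRR (sz t) (mm t) (sch t) (SS t).

Lemma main_CMDRR : @is_CMDRR n (\sum_t mm t) (HS hole L ++ HH e sch) (Sp e SS).
Proof.
split.
- split.
  + apply: (Sp_match e_hole e_inj) => t; by case: (Hsch t) => -[].
  + rewrite (card_Sp e_hole e_inj); apply: eq_bigr => t _; by case: (Hsch t) => -[].
- move=> g; rewrite mem_cat => /orP [gH|gH]; first exact: (HS_distinct HL).
  case/mem_HH: gH => t [g0 [g0s ->]].
  case: (Hsch t) => _ Hd _ _ _; have [d1 d2] := Hd _ g0s.
  by move: d1 d2; rewrite /eg /gm1 /gm2 /gf1 /gf2 /= !(inj_eq (@e_inj _)).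
- move=> g a b; rewrite mem_cat => /orP [gH|gH] ab.
  + apply: (HS_spouse HL gH); exact: (Sp_hole e_hole ab).
  + case/mem_HH: gH => t' [g0 [g0s ->]].
    case/(mem_Sp (e:=e)): ab => t [u [v [uv [-> ->]]]].
    case: (eqVneq t' t) => [et|nt].
      subst t'; case: (Hsch t) => _ _ Hs _ _; have := Hs _ _ _ g0s uv.
      by rewrite /eg /in_game_m /in_game_w /gm1 /gm2 /gf1 /gf2 /= !(inj_eq (@e_inj _)).
    by rewrite /eg /in_game_m /in_game_w /gm1 /gm2 /gf1 /gf2 /= !(e_neq e_hole).
- move=> a b ab; case: (boolP (hole a == hole b)) => [/eqP hab|hab].
  + move: b ab hab; move: a; apply: (hole_ind e_surj) => t u b ab hab.
    rewrite e_hole in hab; have [v ev] := e_surj (esym hab); subst b.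
    rewrite !count_cat (HS_partners HL) (HS_oppmw HL) !e_hole eqxx.
    rewrite (HH_partners_same e_hole e_inj) (HH_oppmw_same e_hole e_inj) /=.
    rewrite (Sp_in e_hole e_inj) in ab.
    by case: (Hsch t) => _ _ _ H _; exact: H.
  + by rewrite !count_cat (HS_partners HL) (HS_oppmw HL) hab (HH_partners_diff e_hole)
       ?(HH_oppmw_diff e_hole).
- split.
  + apply: (opp_transfer e_hole e_inj e_surj
      (cnt := fun a b => count (fun g => opp_mm g a b) (HS hole L ++ HH e sch))
      (cntt := fun t u v => count (fun g => opp_mm g u v) (sch t))
      (hst := fun t => has_spouse_m (SS t))).
    * by move=> a b h /=; rewrite count_cat (HS_oppmm HL) (HH_oppmm_diff e_hole) // h.
    * by move=> t u v /=; rewrite count_cat (HS_oppmm HL) (HH_oppmm_same e_hole e_inj) !e_hole eqxx.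
    * by move=> t u; exact: (hs_m e_hole e_inj).
    * by move=> t; case: (Hsch t) => _ _ _ _ [[M1 M2] _]; split.
  + apply: (opp_transfer e_hole e_inj e_surj
      (cnt := fun a b => count (fun g => opp_ww g a b) (HS hole L ++ HH e sch))
      (cntt := fun t u v => count (fun g => opp_ww g u v) (sch t))
      (hst := fun t => has_spouse_w (SS t))).
    * by move=> a b h /=; rewrite count_cat (HS_oppww HL) (HH_oppww_diff e_hole) // h.
    * by move=> t u v /=; rewrite count_cat (HS_oppww HL) (HH_oppww_same e_hole e_inj) !e_hole eqxx.
    * by move=> t u; exact: (hs_w e_hole e_inj).
    * by move=> t; case: (Hsch t) => _ _ _ _ [_ [W1 W2]]; split.
Qed.

End Main.

Lemma construct n (T : finType) (sz : T -> nat) (mm : T -> nat) :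
  HSOLS_exists n sz -> (forall t, CMDRR_exists (sz t) (mm t)) ->
  CMDRR_exists n (\sum_t mm t).
Proof.
case=> hole [L HL] Hc.
have Hcard : forall t, #|[set x | hole x == t]| = sz t by case: HL.
pose e t (u : 'I_(sz t)) : 'I_n :=
  @enum_val _ (mem [set x | hole x == t]) (cast_ord (esym (Hcard t)) u).
have e_hole : forall t u, hole (e t u) = t.
  by move=> t u; have := enum_valP (cast_ord (esym (Hcard t)) u); rewrite inE => /eqP.
have e_inj : forall t, injective (e t).
  by move=> t u v /enum_val_inj /cast_ord_inj.
have e_surj : forall t x, hole x = t -> exists u, e t u = x.
  move=> t x hx; have xA : x \in [set x | hole x == t] by rewrite inE hx.
  exists (cast_ord (Hcard t) (enum_rank_in xA x)).
  by rewrite /e cast_ordK enum_rankK_in.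
have F : forall t, {p : seq (game (sz t)) * {set 'I_(sz t) * 'I_(sz t)} |
                     @is_CMDRR _ (mm t) p.1 p.2}.
  move=> t; apply: constructive_indefinite_description.
  by have [s [S H]] := Hc t; exists (s, S).
exists (HS hole L ++ HH e (fun t => (sval (F t)).1)), (Sp e (fun t => (sval (F t)).2)).
apply: (main_CMDRR HL e_hole e_inj e_surj) => t.
exact: (svalP (F t)).
Qed.

Theorem theorem1 (k : nat) (h nn : 'I_k -> nat)
    (m : forall i : 'I_k, 'I_(nn i) -> nat) :
  HSOLS_exists (\sum_(i < k) nn i * h i)
    (fun p : {i : 'I_k & 'I_(nn i)} => h (tag p)) ->
  (forall (i : 'I_k) (j : 'I_(nn i)), CMDRR_exists (h i) (m i j)) ->
  CMDRR_exists (\sum_(i < k) nn i * h i)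
    (\sum_(i < k) \sum_(j < nn i) m i j).
Proof.
move=> H Hc; rewrite -sum_sig.
apply: (construct H) => t; exact: Hc.
Qed.
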